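(* Let $\mathcal{A}=(Q,\delta,I,F)$ be a complete Büchi automaton with $n=|Q|$, let $\mathcal{B}_S$ be the automaton produced from $\mathcal{A}$ by Schewe's rank-based complementation construction, and let $\mathcal{B}_S^{\mathit{sat}}$ be the saturated variant (both described in the context). Then $\mathcal{L}(\mathcal{B}_S^{\mathit{sat}})=\mathcal{L}(\mathcal{B}_S)$.
   Context: Fix a finite nonempty alphabet $\Sigma$. A Büchi automaton is $\mathcal{A}=(Q,\delta,I,F)$ with $\delta:Q\times\Sigma\to2^Q$, complete if $\delta(q,a)\ne\emptyset$ always; $\delta(P,a)=\bigcup_{p\in P}\delta(p,a)$. A run from $q$ on $\alpha=\alpha_0\alpha_1\cdots$ is $\rho$ with $\rho_0=q$, $\rho_{i+1}\in\delta(\rho_i,\alpha_i)$; accepting if some state of $F$ occurs infinitely often; $\mathcal{L}(\mathcal{A})$ is the set of words with an accepting run from an initial state. Delayed simulation: in the game from $(p_0,r_0)$, in round $i$ Spoiler picks $p_i\xrightarrow{\alpha_i}p_{i+1}$ and Duplicator answers $r_i\xrightarrow{\alpha_i}r_{i+1}$; a Duplicator strategy is a map $\sigma$ with $\sigma(r,p\xrightarrow{a}p')\in\delta(r,a)$ (no lookahead). Duplicator wins if for all $i$, $p_i\in F$ implies $r_k\in F$ for some $k\ge i$. $p\preceq_{\mathit{de}}r$ iff Duplicator has a winning strategy from $(p,r)$. Schewe's construction. A ranking is $f:Q\to\{0,\dots,2n\}$ with $f(q)$ even for $q\in F$; $\mathrm{rank}(f)=\max_q f(q)$. $f$ is $S$-tight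 ($S\subseteq Q$) if $\mathrm{rank}(f)=r$ is odd, $\{f(s)\mid s\in S\}\supseteq\{1,3,\dots,r\}$ and $\{f(q)\mid q\notin S\}=\{0\}$; $\mathcal{T}$ is the set of $Q$-tight rankings. $\mathcal{B}_S=(Q',\delta',I',F')$: $Q'=Q_1\cup Q_2$, $Q_1=2^Q$, $Q_2=\{(S,O,f,i)\in 2^Q\times2^Q\times\mathcal{T}\times\{0,2,\dots,2n-2\}\mid f \text{ is } S\text{-tight},\ O\subseteq S\cap f^{-1}(i)\}$; $I'=\{I\}$; $\delta'=\delta_1\cup\delta_2\cup\delta_3$ with $\delta_1(S,a)=\{\delta(S,a)\}$; $\delta_2(S,a)=\{(S',\emptyset,f,0)\in Q_2\mid S'=\delta(S,a), f \text{ is } S'\text{-tight}\}$; $(S',O',f',i')\in\delta_3((S,O,f,i),a)$ iff $(S',O',f',i')\in Q_2$, $S'=\delta(S,a)$, $f'(q')\le f(q)$ for all $q\in S,q'\in\delta(q,a)$, $\mathrm{rank}(f)=\mathrm{rank}(f')$, $f'$ is $S'$-tight, and either ($O=\emptyset$, $i'=(i+2)\bmod(\mathrm{rank}(f')+1)$, $O'=f'^{-1}(i')$) or ($O\ne\emptyset$, $i'=i$, $O'=\delta(O,a)\cap f'^{-1}(i)$); $F'=\{\emptyset\}\cup\{(S,\emptyset,f,i)\in Q_2\}$. Saturated variant: for $S\subseteq Q$ let $\mathrm{str}(S)=\{q\in Q\mid\exists s\in S: q\preceq_{\mathit{de}}s\}$. $\mathcal{B}_S^{\mathit{sat}}$ has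 the same $Q'$, $I'$, $F'$ as $\mathcal{B}_S$, but transition function $\delta_1^{\mathit{sat}}\cup\delta_2^{\mathit{sat}}\cup\delta_3^{\mathit{sat}}$ where $\delta_1^{\mathit{sat}}(S,a)=\{\mathrm{str}(\delta(S,a))\}$; $\delta_2^{\mathit{sat}}(S,a)=\{(S',\emptyset,f,0)\in Q_2\mid S'=\mathrm{str}(\delta(S,a))\}$; and $(S',O',f',i')\in\delta_3^{\mathit{sat}}((S,O,f,i),a)$ iff $(S',O',f',i')\in Q_2$, $S'=\mathrm{str}(\delta(S,a))$, $f'(q')\le f(q)$ for all $q\in S,q'\in\delta(q,a)$, $\mathrm{rank}(f)=\mathrm{rank}(f')$, and either ($O=\emptyset$, $i'=(i+2)\bmod(\mathrm{rank}(f')+1)$, $O'=f'^{-1}(i')$) or ($O\ne\emptyset$, $i'=i$, $O'=\delta(O,a)\cap f'^{-1}(i)$). *)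

(* Defs.v *)
From mathcomp Require Import all_boot.
From mathcomp Require Import boolp.

Set Implicit Arguments.
Unset Strict Implicit.
Unset Printing Implicit Defensive.

Definition accepts {Sigma St : Type} (trans : St -> Sigma -> St -> Prop)
    (init fin : St -> Prop) (w : nat -> Sigma) : Prop :=
  exists rho : nat -> St,
    init (rho 0) /\
    (forall i, trans (rho i) (w i) (rho i.+1)) /\
    (forall N, exists k, N <= k /\ fin (rho k)).

Section Schewe.
Variables (Sigma Q : finType) (delta : Q -> Sigma -> {set Q}) (I F : {set Q}).

Definition deltaS (P : {set Q}) (a : Sigma) : {set Q} :=
  \bigcup_(p in P) delta p a.

(* Duplicator strategy: sigma r p a p' is Duplicator's answer from r to the
   Spoiler move p -a-> p' (no lookahead). *)
Fixpoint dup_run (sigma : Q -> Q -> Sigma -> Q -> Q) (r0 : Q)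
    (ps : nat -> Q) (al : nat -> Sigma) (i : nat) : Q :=
  match i with
  | 0 => r0
  | i'.+1 => sigma (dup_run sigma r0 ps al i') (ps i') (al i') (ps i'.+1)
  end.

Definition delayed_sim (p0 r0 : Q) : Prop :=
  exists sigma : Q -> Q -> Sigma -> Q -> Q,
    (forall r p a p', p' \in delta p a -> sigma r p a p' \in delta r a) /\
    (forall (ps : nat -> Q) (al : nat -> Sigma),
       ps 0 = p0 ->
       (forall i, ps i.+1 \in delta (ps i) (al i)) ->
       forall i, ps i \in F ->
         exists k, i <= k /\ dup_run sigma r0 ps al k \in F).

Definition str (S : {set Q}) : {set Q} :=
  [set q | `[< exists2 s, s \in S & delayed_sim q s >]].

Definition n := #|Q|.

Definition rank (f : {ffun Q -> nat}) : nat := \max_(q : Q) f q.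

Definition is_ranking (f : {ffun Q -> nat}) : Prop :=
  forall q, f q <= 2 * n /\ (q \in F -> ~~ odd (f q)).

Definition tight (S : {set Q}) (f : {ffun Q -> nat}) : Prop :=
  [/\ odd (rank f),
      (forall j, odd j -> j <= rank f -> exists2 s, s \in S & f s = j)
    & (forall q, q \notin S -> f q = 0)].

Definition preim (f : {ffun Q -> nat}) (i : nat) : {set Q} :=
  [set q | f q == i].

Definition inQ2 (S O : {set Q}) (f : {ffun Q -> nat}) (i : nat) : Prop :=
  [/\ is_ranking f, tight setT f, tight S f,
      ~~ odd i /\ i <= 2 * n - 2
    & O \subset S :&: preim f i].

(* States Q' = Q_1 + (candidate Q_2 tuples (S, O, f, i)) *)
Definition sstate : Type :=
  ({set Q} + ({set Q} * {set Q} * {ffun Q -> nat} * nat))%type.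

Definition s_init (x : sstate) : Prop := x = inl I.

Definition s_final (x : sstate) : Prop :=
  x = inl set0 \/
  exists S f i, x = inr (S, set0, f, i) /\ inQ2 S set0 f i.

(* Shared part of delta_3 / delta_3^sat, given the successor macrostate S'. *)
Definition step3 (S O : {set Q}) (f : {ffun Q -> nat}) (i : nat) (a : Sigma)
    (S' O' : {set Q}) (f' : {ffun Q -> nat}) (i' : nat) : Prop :=
  [/\ inQ2 S O f i, inQ2 S' O' f' i',
      (forall q q', q \in S -> q' \in delta q a -> f' q' <= f q),
      rank f = rank f'
    & (O = set0 /\ i' = (i + 2) %% (rank f' + 1) /\ O' = S' :&: preim f' i')
      \/ (O != set0 /\ i' = i /\ O' = deltaS O a :&: preim f' i)].

Definition schewe_trans (x : sstate) (a : Sigma) (y : sstate) : Prop :=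
  match x, y with
  | inl X, inl X' => X' = deltaS X a
  | inl X, inr (X', Y', f, i) =>
      [/\ inQ2 X' Y' f i, X' = deltaS X a, Y' = set0, i = 0 & tight X' f]
  | inr (X, Y, f, i), inr (X', Y', f', i') =>
      [/\ X' = deltaS X a, tight X' f' & step3 X Y f i a X' Y' f' i']
  | inr _, inl _ => False
  end.

Definition schewe_sat_trans (x : sstate) (a : Sigma) (y : sstate) : Prop :=
  match x, y with
  | inl X, inl X' => X' = str (deltaS X a)
  | inl X, inr (X', Y', f, i) =>
      [/\ inQ2 X' Y' f i, X' = str (deltaS X a), Y' = set0 & i = 0]
  | inr (X, Y, f, i), inr (X', Y', f', i') =>
      X' = str (deltaS X a) /\ step3 X Y f i a X' Y' f' i'
  | inr _, inl _ => False
  end.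

End Schewe.

(* Main.v *)
Require Import Defs.
From mathcomp Require Import all_boot.
From mathcomp Require Import boolp.
From mathcomp Require Import zify.
From Stdlib Require Import Lia.

Set Implicit Arguments.
Unset Strict Implicit.
Unset Printing Implicit Defensive.

Lemma min_ex (P : nat -> Prop) :
  (exists m, P m) -> exists m, P m /\ forall m', m' < m -> ~ P m'.
Proof.
move=> H.
have H' : exists m, `[< P m >] by case: H => m Pm; exists m; apply/asboolP.
case: (ex_minnP H') => m /asboolP Pm Hmin; exists m; split=> // m' lt PM'.
have := Hmin m' (asboolT PM'); rewrite leqNgt lt; done.
Qed.

Lemma anti_le (T : Type) (R : T -> nat -> Prop) :
  (forall q l, R q l.+1 -> R q l) -> forall q l l', l <= l' -> R q l' -> R q l.
Proof.
move=> anti q l l' /subnK <-; elim: (l' - l) => [|d IH] //= H.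
by apply: IH; apply: anti; rewrite -addSn.
Qed.

Lemma pigeon (Q : finType) (R : Q -> nat -> Prop) :
  (forall q l, R q l.+1 -> R q l) ->
  (forall l, exists q, R q l) -> exists q, forall l, R q l.
Proof.
move=> anti H; apply: contrapT => Hn.
have Hq : forall q, exists l, ~ R q l.
  move=> q; apply/existsNP => Hall; apply: Hn; by exists q.
pose lq q := projT1 (cid (Hq q)).
have lqP q : ~ R q (lq q) := projT2 (cid (Hq q)).
case: (H (\max_q lq q)) => q Rq.
apply: (lqP q); apply: (anti_le anti _ Rq); exact: leq_bigmax.
Qed.

Lemma build_path (Q : Type) (good : nat -> Q -> Prop) (step : nat -> Q -> Q -> Prop) :
  (forall j q, good j q -> exists q', step j q q' /\ good j.+1 q') ->
  forall j q, good j q -> exists pi : nat -> Q,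
    pi 0 = q /\ forall t, step (j + t) (pi t) (pi t.+1) /\ good (j + t) (pi t).
Proof.
move=> Hs j q gq.
pose nxt j q := match pselect (exists q', step j q q' /\ good j.+1 q') with
  | left H => projT1 (cid H) | right _ => q end.
have nxtP j0 q0 : good j0 q0 -> step j0 q0 (nxt j0 q0) /\ good j0.+1 (nxt j0 q0).
  move=> g0; rewrite /nxt; case: pselect => [H|H]; last by exfalso; apply: H; exact: Hs.
  exact: projT2 (cid H).
pose pi := fix f t := if t is t'.+1 then nxt (j + t') (f t') else q.
exists pi; split => // t.
have G : good (j + t) (pi t).
  elim: t => [|t IH]; first by rewrite addn0.
  by rewrite addnS; case: (nxtP _ _ IH).
by split=> //; case: (nxtP _ _ G).
Qed.
Section Sim.
Variables (Sigma Q : finType) (delta : Q -> Sigma -> {set Q}) (F : {set Q}).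
Hypothesis Hcomp : forall q a, delta q a != set0.

Local Notation strat := (Q -> Q -> Sigma -> Q -> Q).
Definition Wn (sigma : strat) (p0 r0 : Q) :=
  forall (ps : nat -> Q) (al : nat -> Sigma),
       ps 0 = p0 ->
       (forall i, ps i.+1 \in delta (ps i) (al i)) ->
       forall i, ps i \in F ->
         exists k, i <= k /\ dup_run sigma r0 ps al k \in F.

Lemma dup_run_ext (sigma : strat) r0 ps (al : nat -> Sigma) ps2 al2 t :
  (forall i, i <= t -> ps i = ps2 i) -> (forall i, i < t -> al i = al2 i) ->
  dup_run sigma r0 ps al t = dup_run sigma r0 ps2 al2 t.
Proof.
elim: t => [|t IH] //= Hp Ha.
rewrite IH; last 2 first.
- by move=> i le; apply: Hp; apply: leqW.
- by move=> i le; apply: Ha; apply: ltnW.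
by rewrite Hp // Hp // ?Ha // ltnW.
Qed.

Lemma dup_run_shift (sigma : strat) r0 ps al t s :
  dup_run sigma r0 ps al (t + s) =
  dup_run sigma (dup_run sigma r0 ps al t) (fun s => ps (t + s)) (fun s => al (t + s)) s.
Proof.
elim: s => [|s IH]; first by rewrite addn0.
by rewrite addnS /= IH addnS.
Qed.

Lemma W_suffix (sigma : strat) p0 r0 ps al t :
  Wn sigma p0 r0 -> ps 0 = p0 -> (forall i, ps i.+1 \in delta (ps i) (al i)) ->
  Wn sigma (ps t) (dup_run sigma r0 ps al t).
Proof.
move=> W p0E val ps' al' ps'0 val' i Fi.
pose ps'' i := if i < t then ps i else ps' (i - t).
pose al'' i := if i < t then al i else al' (i - t).
have E1 : ps'' 0 = p0.
  rewrite /ps''; case: ifP => [_|]; first by [].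
  rewrite ltnNge leqn0 => /negbFE/eqP tE; by rewrite tE subn0 ps'0 tE.
have V : forall i, ps'' i.+1 \in delta (ps'' i) (al'' i).
  move=> j; rewrite /ps'' /al''.
  case: (ltngtP j.+1 t) => H; rewrite -/(leq _ _).
  - exact: val.
  - by rewrite subSn //; exact: val'.
  - by rewrite -H subnn ps'0 -H; exact: val.
have Fi' : ps'' (t + i) \in F by rewrite /ps'' ltnNge leq_addr /= addKn.
case: (W ps'' al'' E1 V _ Fi') => k [le Fk].
exists (k - t); split; first by rewrite leq_subRL ?(leq_trans (leq_addr _ _) le) // .
have kE : k = t + (k - t) by rewrite subnKC // (leq_trans (leq_addr _ _) le).
move: Fk; rewrite {1}kE dup_run_shift.
rewrite (@dup_run_ext _ _ _ _ ps al t); last 2 first.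
- move=> j le'; rewrite /ps''; case: ifP => // /negbT; rewrite -leqNgt => le2.
  have -> : j = t by apply/eqP; rewrite eqn_leq le' le2.
  by rewrite subnn ps'0.
- by move=> j lt; rewrite /al'' lt.
rewrite (@dup_run_ext _ _ _ _ ps' al') //.
- by move=> j _; rewrite /ps'' ltnNge leq_addr /= addKn.
- by move=> j _; rewrite /al'' ltnNge leq_addr /= addKn.
Qed.

Definition succ0 (q : Q) (a : Sigma) : Q := odflt q [pick x in delta q a].

Lemma succ0P q a : succ0 q a \in delta q a.
Proof.
rewrite /succ0; case: pickP => //= H; exfalso.
by move/negP: (Hcomp q a); apply; apply/eqP/setP => x; rewrite inE H.
Qed.

Lemma sim_refl q : delayed_sim delta F q q.
Proof.
exists (fun r p a p' => if p' \in delta r a then p' else succ0 r a); split.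
  by move=> r p a p' _; case: ifP => // _; apply: succ0P.
move=> ps al ps0 val i Fi; exists i; split=> //.
suff -> : dup_run (fun r p a p' => if p' \in delta r a then p' else succ0 r a) q ps al i = ps i by [].
elim: i {Fi} => [|i IH] //=; by rewrite IH val.
Qed.

Lemma sim_suffix q s ps al :
  delayed_sim delta F q s -> ps 0 = q -> (forall i, ps i.+1 \in delta (ps i) (al i)) ->
  exists sigma : strat, [/\ dup_run sigma s ps al 0 = s,
   (forall t, delayed_sim delta F (ps t) (dup_run sigma s ps al t) /\
     dup_run sigma s ps al t.+1 \in delta (dup_run sigma s ps al t) (al t)) &
   (forall i, ps i \in F -> exists k, i <= k /\ dup_run sigma s ps al k \in F)].
Proof.
case=> sigma [leg W] ps0 val; exists sigma; split=> //; last by apply: W.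
move=> t'; split.
- exists sigma; split=> //; exact: (@W_suffix sigma q s ps al t' W ps0 val).
- by rewrite /=; apply: leg; apply: val.
Qed.

End Sim.
Section Auto.
Variables (Sigma Q : finType) (delta : Q -> Sigma -> {set Q}) (F : {set Q})
  (g : {set Q} -> {set Q}).

Definition gtrans (x : sstate Q) (a : Sigma) (y : sstate Q) : Prop :=
  match x, y with
  | inl X, inl X' => X' = g (deltaS delta X a)
  | inl X, inr (X', Y', f, i) =>
      [/\ inQ2 F X' Y' f i, X' = g (deltaS delta X a), Y' = set0 & i = 0]
  | inr (X, Y, f, i), inr (X', Y', f', i') =>
      X' = g (deltaS delta X a) /\ step3 delta F X Y f i a X' Y' f' i'
  | inr _, inl _ => False
  end.

Definition sS (x : sstate Q) : {set Q} := match x with inl X => X | inr (X, _, _, _) => X end.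
Definition sO (x : sstate Q) : {set Q} := match x with inl _ => set0 | inr (_, Y, _, _) => Y end.
Definition sf (x : sstate Q) : {ffun Q -> nat} :=
  match x with inl _ => [ffun _ => 0] | inr (_, _, f, _) => f end.
Definition si (x : sstate Q) : nat := match x with inl _ => 0 | inr (_, _, _, i) => i end.
Definition isr (x : sstate Q) : bool := if x is inr _ then true else false.

Lemma isrE x : isr x -> x = inr (sS x, sO x, sf x, si x).
Proof. by case: x => // [[[[]]]]. Qed.

Lemma gtrans_S x a y : gtrans x a y -> sS y = g (deltaS delta (sS x) a).
Proof. by case: x => [X|[[[X Y] f] i]]; case: y => [X'|[[[X' Y'] f'] i']] //= [] //. Qed.

Lemma gtrans_r x a y : isr x -> gtrans x a y ->
  isr y /\ step3 delta F (sS x) (sO x) (sf x) (si x) a (sS y) (sO y) (sf y) (si y).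
Proof. by case: x => [X|[[[X Y] f] i]]; case: y => [X'|[[[X' Y'] f'] i']] //= _ []. Qed.

Lemma gtrans_lr x a y : ~~ isr x -> isr y -> gtrans x a y -> si y = 0.
Proof. by case: x => [X|[[[X Y] f] i]]; case: y => [X'|[[[X' Y'] f'] i']] //= _ _ []. Qed.

Lemma final_r x : isr x -> s_final F x -> sO x = set0.
Proof. by case: x => // [[[[X Y] f] i]] _ [//|[S [f' [i' [[_ -> _ _]]]]]]. Qed.

Lemma final_l x : ~~ isr x -> s_final F x -> sS x = set0.
Proof. by case: x => // X _ [[->]|[S [f' [i' []]]]]. Qed.

End Auto.
Section KV.
Variables (Sigma Q : finType) (delta : Q -> Sigma -> {set Q}) (F : {set Q}).
Hypothesis Hcomp : forall q a, delta q a != set0.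
Variable w : nat -> Sigma.
Variable X : nat -> {set Q}.
Hypothesis H1 : forall j q q', q \in X j -> q' \in delta q (w j) -> q' \in X j.+1.

Definition valid j (pi : nat -> Q) := forall t, pi t.+1 \in delta (pi t) (w (j + t)).
Definition infF (pi : nat -> Q) := forall N, exists k, N <= k /\ pi k \in F.

Definition infpath (P : nat -> Q -> Prop) j q :=
  exists pi, pi 0 = q /\ valid j pi /\ forall t, P (j + t) (pi t).
Definition fpath (P : nat -> Q -> Prop) j q l :=
  exists pi : nat -> Q, pi 0 = q /\
    (forall t, t < l -> pi t.+1 \in delta (pi t) (w (j + t))) /\
    forall t, t <= l -> P (j + t) (pi t).
Definition reachFn (P : nat -> Q -> Prop) j q l :=
  exists pi : nat -> Q, [/\ pi 0 = q,
    (forall t, t < l -> pi t.+1 \in delta (pi t) (w (j + t))),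
    (forall t, t <= l -> P (j + t) (pi t)) & pi l \in F].
Definition reachF P j q := exists l, reachFn P j q l.

Fixpoint G k : nat -> Q -> Prop :=
  match k with
  | 0 => fun j q => q \in X j
  | k'.+1 => fun j q => G k' j q /\
       (if odd k' then reachF (G k') j q else infpath (G k') j q)
  end.

Definition pc (q : Q) (pi : nat -> Q) := fun t => if t is t'.+1 then pi t' else q.

Lemma valid_X j pi : pi 0 \in X j -> valid j pi -> forall t, pi t \in X (j + t).
Proof.
move=> X0 V; elim=> [|t IH]; first by rewrite addn0.
by rewrite addnS; apply: H1 IH (V t).
Qed.

Lemma any_path j q : exists pi, pi 0 = q /\ valid j pi.
Proof.
have Hs : forall j0 q0, True -> exists q', q' \in delta q0 (w j0) /\ True.
  move=> j0 q0 _; exists (succ0 delta q0 (w j0)); split=> //; exact: succ0P.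
have [pi [p0 H]] := @build_path Q (fun _ _ => True) (fun j q q' => q' \in delta q (w j)) Hs j q I.
exists pi; split=> // t; by case: (H t).
Qed.

Lemma G_X k j q : G k j q -> q \in X j.
Proof. by elim: k j q => [|k IH] j q //= [/IH]. Qed.

Lemma G_dec k j q : G k.+1 j q -> G k j q.
Proof. by case. Qed.

Lemma G_anti k k' j q : k <= k' -> G k' j q -> G k j q.
Proof.
move=> /subnK <-; elim: (k' - k) => [|d IH] //= H.
by apply: IH; apply: G_dec; rewrite -addSn.
Qed.

Lemma G_odd_path k j pi : ~~ odd k -> valid j pi ->
  (forall t, G k (j + t) (pi t)) -> forall t, G k.+1 (j + t) (pi t).
Proof.
move=> ek V HG t /=; rewrite (negbTE ek); split=> //.
exists (fun s => pi (t + s)); split; first by rewrite addn0.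
split; first by move=> s; rewrite addnS -addnA; apply: V.
by move=> s; rewrite -addnA.
Qed.

Lemma G_succ k j q : ~~ odd k -> G k.+1 j q -> exists q', q' \in delta q (w j) /\ G k.+1 j.+1 q'.
Proof.
move=> ek [_]; rewrite (negbTE ek) => -[pi [p0 [V HG]]].
exists (pi 1); split; first by rewrite -p0 -[j]addn0; apply: V.
by have := G_odd_path ek V HG 1; rewrite addn1.
Qed.

Lemma pre_inf P j q q' : q' \in delta q (w j) -> P j q -> infpath P j.+1 q' -> infpath P j q.
Proof.
move=> e Pq [pi [p0 [V HP]]]; exists (pc q pi); split=> //; split.
- by case=> [|t] /=; [rewrite addn0 p0 | rewrite addnS -addSn; apply: V].
- by case=> [|t] /=; [rewrite addn0 | rewrite addnS -addSn].
Qed.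

Lemma pre_reach P j q q' l : q' \in delta q (w j) -> P j q -> reachFn P j.+1 q' l -> reachFn P j q l.+1.
Proof.
move=> e Pq [pi [p0 V HP Fl]]; exists (pc q pi); split=> //.
- by case=> [|t] /= lt; [rewrite addn0 p0 | rewrite addnS -addSn; apply: V].
- by case=> [|t] /= lt; [rewrite addn0 | rewrite addnS -addSn; apply: HP].
Qed.

Lemma pre_fpath P j q q' l : q' \in delta q (w j) -> P j q -> fpath P j.+1 q' l -> fpath P j q l.+1.
Proof.
move=> e Pq [pi [p0 [V HP]]]; exists (pc q pi); split=> //; split.
- by case=> [|t] /= lt; [rewrite addn0 p0 | rewrite addnS -addSn; apply: V].
- by case=> [|t] /= lt; [rewrite addn0 | rewrite addnS -addSn; apply: HP].
Qed.

Lemma edge_mono k j q q' : q \in X j -> q' \in delta q (w j) -> G k j.+1 q' -> G k j q.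
Proof.
move=> Xq e; elim: k => [|k IH] /=; first by [].
case=> Gq' H; have Gq := IH Gq'; split=> //; case: ifP H => _.
- by case=> l R; exists l.+1; apply: pre_reach R.
- exact: pre_inf.
Qed.

Definition concat (pi : nat -> Q) l (tau : nat -> Q) :=
  fun t => if t <= l then pi t else tau (t - l).

Lemma concat_valid j pi l tau : tau 0 = pi l ->
  (forall t, t < l -> pi t.+1 \in delta (pi t) (w (j + t))) -> valid (j + l) tau ->
  valid j (concat pi l tau).
Proof.
move=> t0 Vp Vt t; rewrite /concat.
case: (leqP t.+1 l) => H; first by rewrite (ltnW H) Vp.
have lt : l <= t by [].
case: (ltngtP t l) => H2.
- by exfalso; move: lt; rewrite leqNgt H2.
- rewrite subSn //; have := Vt (t - l); by rewrite -addnA subnKC.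
- rewrite H2 subSn // subnn -t0; have := Vt 0; by rewrite !addn0.
Qed.

Lemma concat_P (P : nat -> Q -> Prop) j pi l tau :
  (forall t, t <= l -> P (j + t) (pi t)) -> (forall s, P (j + l + s) (tau s)) ->
  forall t, P (j + t) (concat pi l tau t).
Proof.
move=> Hp Ht t; rewrite /concat; case: ifP => [le|/negbT]; first exact: Hp.
rewrite -ltnNge => lt; have := Ht (t - l); rewrite -addnA subnKC //; exact: ltnW.
Qed.

Lemma concat_lo pi l tau t : t <= l -> concat pi l tau t = pi t.
Proof. by rewrite /concat => ->. Qed.

Lemma dupl j pi q s : pi 0 = q -> valid j pi -> delayed_sim delta F q s -> s \in X j ->
  exists rho, [/\ rho 0 = s, valid j rho,
    (forall t, delayed_sim delta F (pi t) (rho t) /\ rho t \in X (j + t)) &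
    (forall i, pi i \in F -> exists k, i <= k /\ rho k \in F)].
Proof.
move=> p0 V Hs Xs.
have [sigma [r0 Hr HF]] := sim_suffix (al := fun t => w (j + t)) Hs p0 V.
exists (dup_run sigma s pi (fun t => w (j + t))); split=> //.
- by move=> t; case: (Hr t).
- move=> t; split; first by case: (Hr t).
  apply: valid_X; first by rewrite r0.
  by move=> t'; case: (Hr t').
Qed.

Lemma G_inf k j q : ~~ odd k -> G k.+1 j q ->
  exists tau, [/\ tau 0 = q, valid j tau & forall t, G k.+1 (j + t) (tau t)].
Proof.
move=> ek Gq; have := Gq => -[_]; rewrite (negbTE ek) => -[pi [p0 [V HG]]].
by exists pi; split=> //; apply: G_odd_path.
Qed.

Lemma sim_mono k j q s : delayed_sim delta F q s -> s \in X j -> G k j q -> G k j s.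
Proof.
elim: k j q s => [|k IH] j q s Hsim Xs; first by [].
move=> /= [Gq H]; split; first exact: IH Gq.
case: ifP H => ok.
- case=> l [pi [p0 Vp Hp Fl]].
  have k1 : k = k.-1.+1 by move: ok; case: k {IH Gq Hp}.
  have ek : ~~ odd k.-1 by move: ok; rewrite {1}k1 /=; case: (odd _).
  have Gl : G k.-1.+1 (j + l) (pi l) by rewrite -k1; apply: Hp.
  have [tau [t0 Vt Ht]] := G_inf ek Gl.
  have V : valid j (concat pi l tau) by apply: concat_valid.
  have HP : forall t, G k (j + t) (concat pi l tau t).
    apply: concat_P => // s0; rewrite k1; apply: Ht.
  have c0 : concat pi l tau 0 = q by rewrite concat_lo.
  have [rho [r0 Vr Hr HF]] := dupl c0 V Hsim Xs.
  have cl : concat pi l tau l \in F by rewrite concat_lo.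
  have [m [lm Fm]] := HF l cl.
  exists m, rho; split=> //.
  + move=> t _; case: (Hr t) => Ht1 Ht2; exact: IH Ht1 Ht2 (HP t).
- case=> pi [p0 [Vp Hp]].
  have [rho [r0 Vr Hr HF]] := dupl p0 Vp Hsim Xs.
  exists rho; split=> //; split=> // t.
  case: (Hr t) => Ht1 Ht2; exact: IH Ht1 Ht2 (Hp t).
Qed.

Lemma fpath_sim k j v s l : delayed_sim delta F v s -> s \in X j ->
  fpath (G k) j v l -> fpath (G k) j s l.
Proof.
move=> Hsim Xs [pi [p0 [Vp Hp]]].
have [tau [t0 Vt]] := any_path (j + l) (pi l).
have V : valid j (concat pi l tau) by apply: concat_valid.
have c0 : concat pi l tau 0 = v by rewrite concat_lo.
have [rho [r0 Vr Hr _]] := dupl c0 V Hsim Xs.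
exists rho; split=> //; split; first by move=> t _; apply: Vr.
move=> t lt; case: (Hr t) => Ht1 Ht2; apply: sim_mono Ht1 Ht2 _.
by rewrite concat_lo //; apply: Hp.
Qed.


Hypothesis H2 : forall j q, q \in X j.+1 ->
  exists u s, [/\ u \in X j, s \in delta u (w j) & delayed_sim delta F q s].
Hypothesis Hno : forall j pi, pi 0 \in X j -> valid j pi -> infF pi -> False.

Lemma fpath_anti P j q l : fpath P j q l.+1 -> fpath P j q l.
Proof.
case=> pi [p0 [V HP]]; exists pi; split=> //; split=> t lt.
- by apply: V; apply: ltnW.
- by apply: HP; apply: leqW.
Qed.

Lemma konig P j q : (forall l, fpath P j q l) -> infpath P j q.
Proof.
move=> Hq.
pose good j q := forall l, fpath P j q l.
have Hs : forall j q, good j q -> exists q', q' \in delta q (w j) /\ good j.+1 q'.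
  move=> j0 q0 g0.
  have := @pigeon Q (fun q' l => q' \in delta q0 (w j0) /\ fpath P j0.+1 q' l).
  case.
  - by move=> q' l [e H]; split=> //; apply: fpath_anti.
  - move=> l; case: (g0 l.+1) => pi [p0 [V HP]]; exists (pi 1); split.
      by rewrite -p0 -[j0]addn0; apply: V.
    exists (fun t => pi t.+1); split=> //; split=> t lt.
      by rewrite addSnnS; apply: V.
    by rewrite addSnnS; apply: HP.
  - by move=> q' H; exists q'; split; [case: (H 0) | move=> l; case: (H l)].
have [pi [p0 H]] := @build_path Q good (fun j q q' => q' \in delta q (w j)) Hs j q Hq.
exists pi; split=> //; split; first by move=> t; case: (H t).
move=> t; case: (H t) => _ /(_ 0) [rho [r0 [_ HP]]].
by have := HP 0 (leqnn 0); rewrite addn0 r0.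
Qed.

Lemma back k t M0 v l : fpath (G k) (M0 + t) v l -> exists q, fpath (G k) M0 q (l + t).
Proof.
elim: t v l => [|t IH] v l; first by rewrite !addn0 => H; exists v.
move=> Hf; have := Hf => -[pi [p0 [_ HP]]].
have Gv : G k (M0 + t.+1) v by have := HP 0 (leq0n _); rewrite addn0 p0.
have Xv : v \in X (M0 + t).+1 by rewrite -addnS; apply: G_X Gv.
have [u [s [Xu es Hsim]]] := H2 Xv.
have Xs : s \in X (M0 + t).+1 by apply: H1 Xu es.
have Hfs : fpath (G k) (M0 + t).+1 s l by apply: fpath_sim Hsim Xs _; rewrite -addnS.
have Gs : G k (M0 + t).+1 s.
  by case: Hfs => rho [r0 [_ HP2]]; have := HP2 0 (leq0n _); rewrite addn0 r0.
have Gu : G k (M0 + t) u by apply: edge_mono Xu es Gs.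
have [q Hq] := IH u l.+1 (pre_fpath es Gu Hfs).
by exists q; rewrite addnS -addSn.
Qed.

Lemma reach_shift P j q m pi : pi 0 = q ->
  (forall t, t < m.+1 -> pi t.+1 \in delta (pi t) (w (j + t))) ->
  (forall t, t <= m.+1 -> P (j + t) (pi t)) -> pi m.+1 \in F ->
  reachFn P j.+1 (pi 1) m.
Proof.
move=> p0 V HP Fm; exists (fun t => pi t.+1); split=> //.
- by move=> t lt; rewrite addSnnS; apply: V.
- by move=> t lt; rewrite addSnnS; apply: HP.
Qed.

Lemma lemA k j q : ~~ odd k -> G k.+1 j q ->
  exists t q', G k.+1 (j + t) q' /\ ~ reachF (G k.+1) (j + t) q'.
Proof.
move=> ek Gq; apply: contrapT => Hn.
have Hall : forall j' q', j <= j' -> G k.+1 j' q' -> reachF (G k.+1) j' q'.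
  move=> j' q' le G'; apply: contrapT => NR; apply: Hn.
  by exists (j' - j), q'; rewrite subnKC.
pose good j' q' := j <= j' /\ G k.+1 j' q'.
pose mr j' q' m := reachFn (G k.+1) j' q' m /\ forall m', m' < m -> ~ reachFn (G k.+1) j' q' m'.
pose step j' q' q'' := q'' \in delta q' (w j') /\
   (q' \notin F -> forall m, mr j' q' m -> reachFn (G k.+1) j'.+1 q'' m.-1).
have Hs : forall j' q', good j' q' -> exists q'', step j' q' q'' /\ good j'.+1 q''.
  move=> j' q' [le G'].
  case: (boolP (q' \in F)) => Fq.
    have [q'' [e G'']] := G_succ ek G'.
    by exists q''; split; [split=> // /negP | split=> //; apply: leqW].
  have [m [[pi [p0 V HP Fm]] Hmin]] := min_ex (Hall _ _ le G').
  case: m V HP Fm Hmin => [|m] V HP Fm Hmin; first by move: Fq; rewrite -p0 Fm.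
  exists (pi 1); split; last first.
    by split; [apply: leqW | have := HP 1 isT; rewrite addn1].
  split; first by rewrite -p0 -[j']addn0; apply: V.
  move=> _ m0 [R0 Hmin0].
  have -> : m0 = m.+1.
    case: (ltngtP m0 m.+1) => // H.
    - by exfalso; apply: (Hmin m0 H R0).
    - by exfalso; apply: (Hmin0 m.+1 H); exists pi; split.
  exact: reach_shift p0 V HP Fm.
have [pi [p0 H]] := build_path Hs (conj (leqnn j) Gq).
apply: (Hno (j := j) (pi := pi)).
- by rewrite p0; apply: G_X Gq.
- by move=> t; case: (H t) => -[].
move=> N.
have [gN1 gN2] : good (j + N) (pi N) by case: (H N).
have [m [R Hmin]] := min_ex (Hall _ _ gN1 gN2).
elim: m N {gN1 gN2} R Hmin => [|m IH] t R Hmin.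
  by exists t; split=> //; case: R => rho [r0 _ _ F0]; rewrite -r0.
case: (boolP (pi t \in F)) => Ft; first by exists t.
have [[e Hst] [_ Gt]] := H t.
have R' := Hst Ft m.+1 (conj R Hmin).
have [k0 [lk Fk]] : exists k0, t.+1 <= k0 /\ pi k0 \in F.
  apply: IH; first by rewrite addnS.
  move=> m' lt R2; apply: (Hmin m'.+1 lt).
  by apply: pre_reach e Gt _; rewrite -addnS.
by exists k0; split=> //; apply: ltnW.
Qed.

Lemma prepend_n P t j pi : valid j pi -> (forall s, P (j + s) (pi s)) ->
  reachF P (j + t) (pi t) -> reachF P j (pi 0).
Proof.
elim: t j pi => [|t IH] j pi V HP; first by rewrite addn0.
move=> R.
have R1 : reachF P j.+1 (pi 1).
  apply: (IH j.+1 (fun s => pi s.+1)).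
  - by move=> s; rewrite addSnnS; apply: V.
  - by move=> s; rewrite addSnnS; apply: HP.
  - by rewrite addSnnS.
case: R1 => l R1; exists l.+1; apply: pre_reach R1.
- by rewrite -[j]addn0; apply: V.
- by rewrite -[j]addn0; apply: HP.
Qed.

Lemma endangered k j q : ~~ odd k -> G k.+1 j q -> ~ reachF (G k.+1) j q ->
  exists pi, [/\ pi 0 = q, valid j pi &
    forall t, G k.+1 (j + t) (pi t) /\ ~ G k.+2 (j + t) (pi t)].
Proof.
move=> ek Gq NR; have [tau [t0 Vt Ht]] := G_inf ek Gq.
exists tau; split=> // t; split=> //.
move=> [_ R]; have oS : odd k.+1 by rewrite /= ek.
rewrite oS in R.
by apply: NR; rewrite -t0; exact: (prepend_n Vt Ht R).
Qed.
Local Notation n := #|Q|.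
Definition Gs k j := [set q | `[< G k j q >]].

Lemma width i : i <= n -> exists L, forall j, L <= j -> #|Gs (i.*2) j| <= n - i.
Proof.
elim: i => [|i IH] lei; first by exists 0 => j _; rewrite subn0 max_card.
have [L HL] := IH (ltnW lei).
have ek : ~~ odd i.*2 by rewrite odd_double.
case: (pselect (exists j q, L <= j /\ G (i.*2).+1 j q)) => [[j [q [le Gq]]]|Hn].
- have [t [q' [G' NR]]] := lemA ek Gq.
  have [pi [p0 Vp Hp]] := endangered ek G' NR.
  exists (j + t) => j'' le''.
  have E : j + t + (j'' - (j + t)) = j'' by rewrite subnKC.
  have [Gx NGx] := Hp (j'' - (j + t)); rewrite E in Gx NGx.
  have Pr : Gs (i.+1).*2 j'' \proper Gs (i.*2) j''.
    apply/properP; split.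
      apply/subsetP => x; rewrite !inE => /asboolP Gx2; apply/asboolP.
      by apply: (G_anti _ Gx2); rewrite doubleS leqW.
    exists (pi (j'' - (j + t))); rewrite !inE.
      by apply/asboolP; apply: G_dec.
    by apply/asboolP; rewrite doubleS.
  have := proper_card Pr; have := HL j'' (leq_trans le (leq_trans (leq_addr _ _) le'')).
  move: lei; lia.
- exists L => j le.
  suff -> : Gs (i.+1).*2 j = set0 by rewrite cards0.
  apply/setP => x; rewrite !inE; apply/asboolP => Gx.
  apply: Hn; exists j, x; split=> //.
  by apply: G_dec; rewrite -doubleS.
Qed.

Lemma G_empty j q : ~ G (n.*2).+1 j q.
Proof.
move=> Gq; have [L HL] := width (leqnn n).
have ek : ~~ odd n.*2 by rewrite odd_double.
have [tau [t0 Vt Ht]] := G_inf ek Gq.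
have := HL (j + L) (leq_addl _ _); rewrite subnn leqn0 cards_eq0 => /eqP/setP/(_ (tau L)).
by rewrite !inE => /asboolP; apply; apply: G_dec.
Qed.

Definition rk j q := \max_(k < (n.*2).+1 | `[< G k j q >]) k.

Lemma rk_le j q : rk j q <= n.*2.
Proof. by apply/bigmax_leqP => k _; rewrite -ltnS. Qed.

Lemma rk_spec j q : q \in X j -> forall k, G k j q <-> k <= rk j q.
Proof.
move=> Xq k; split.
- move=> Gk; have lt : k < (n.*2).+1.
    rewrite ltnNge; apply/negP => le; apply: (@G_empty j q).
    exact: G_anti le Gk.
  by have := @leq_bigmax_cond _ (fun k : 'I_(n.*2).+1 => `[< G k j q >]) (fun k => nat_of_ord k) (Ordinal lt) (asboolT Gk).
- move=> le; apply: (G_anti le).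
  rewrite /rk (bigmax_eq_arg ord0); last by apply/asboolP.
  by case: arg_maxnP => [|i /asboolP]; first by apply/asboolP.
Qed.

Lemma rk_out j q : q \notin X j -> rk j q = 0.
Proof.
move=> NX; rewrite /rk big_pred0 // => k; apply/asboolP => Gk.
by move/negP: NX; apply; apply: G_X Gk.
Qed.

Lemma rk_G j q : q \in X j -> G (rk j q) j q.
Proof. by move=> Xq; apply/(rk_spec Xq). Qed.

Lemma rk_F j q : q \in F -> ~~ odd (rk j q).
Proof.
move=> Fq; case: (boolP (q \in X j)) => Xq; last by rewrite rk_out.
apply/negP => od.
have : rk j q < rk j q; last by rewrite ltnn.
apply/(rk_spec Xq) => /=; split; first exact: rk_G.
rewrite od; exists 0, (fun _ => q); split=> //.
by move=> t; rewrite leqn0 => /eqP ->; rewrite addn0; apply: rk_G.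
Qed.

Lemma rk_edge j q q' : q \in X j -> q' \in delta q (w j) -> rk j.+1 q' <= rk j q.
Proof.
move=> Xq e; apply/(rk_spec Xq).
exact: (edge_mono Xq e (rk_G (H1 Xq e))).
Qed.

Lemma rk_noeven j pi c : ~~ odd c -> valid j pi -> pi 0 \in X j ->
  (forall t, rk (j + t) (pi t) = c) -> False.
Proof.
move=> ec V X0 Hc.
have XX := valid_X X0 V.
have HG : forall t, G c (j + t) (pi t) by move=> t; rewrite -(Hc t); apply: rk_G.
have H := G_odd_path ec V HG 0.
by have := proj1 (rk_spec (XX 0) c.+1) H; rewrite Hc ltnn.
Qed.


Hypothesis Hne : forall j, X j != set0.

Definition U i := ~ exists M, forall j, M <= j -> forall q, ~ G (i.*2).+1 j q.

Lemma present i : U i -> exists M, forall j, M <= j ->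
  exists q, q \in X j /\ rk j q = (i.*2).+1.
Proof.
move=> Ui.
have [j [q Gq]] : exists j q, G (i.*2).+1 j q.
  apply: contrapT => Hn; apply: Ui; exists 0 => j _ q Gq; apply: Hn; by exists j, q.
have ek : ~~ odd i.*2 by rewrite odd_double.
have [t [q' [G' NR]]] := lemA ek Gq.
have [pi [p0 Vp Hp]] := endangered ek G' NR.
exists (j + t) => j'' le''.
have E : j + t + (j'' - (j + t)) = j'' by rewrite subnKC.
have [Gx NGx] := Hp (j'' - (j + t)); rewrite E in Gx NGx.
exists (pi (j'' - (j + t))); have Xx := G_X Gx; split=> //.
have h1 := proj1 (rk_spec Xx _) Gx.
have h2 : ~ (i.*2).+2 <= rk j'' (pi (j'' - (j + t))).
  by move=> le; apply: NGx; apply/(rk_spec Xx).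
lia.
Qed.

Lemma U_anti i : U i.+1 -> U i.
Proof.
move=> Ui [M HM]; apply: Ui; exists M => j le q Gq; apply: (HM j le q).
by apply: (G_anti _ Gq); rewrite doubleS ltnW.
Qed.

Lemma U_n : ~ U n.
Proof. by apply; exists 0 => j _ q; apply: G_empty. Qed.

Lemma U_0 : U 0.
Proof.
move=> [M HM]; have /set0Pn [q Xq] := Hne M.
have [pi [p0 Vp]] := any_path M q.
apply: (HM M (leqnn M) q) => /=; split=> //.
exists pi; split=> //; split=> //.
by apply: valid_X; rewrite ?p0.
Qed.

Lemma fpath_anti_le P j q l l' : l <= l' -> fpath P j q l' -> fpath P j q l.
Proof. by move=> le; apply: (@anti_le Q (fun q l => fpath P j q l)) => // q0 l0; apply: fpath_anti. Qed.

Lemma R8 k M0 : ~~ odd k -> (forall j, M0 <= j -> forall q, ~ G k.+1 j q) ->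
  exists M1, forall j, M1 <= j -> forall q, ~ G k j q.
Proof.
move=> ek HM0; apply: contrapT => Hn.
have H : forall M1, exists j q, M1 <= j /\ G k j q.
  move=> M1; apply: contrapT => Hn2; apply: Hn; exists M1 => j le q Gq.
  by apply: Hn2; exists j, q.
have Hl : forall l, exists q, fpath (G k) M0 q l.
  move=> l; have [j [q [le Gq]]] := H (M0 + l).
  have E : M0 + (j - M0) = j by rewrite subnKC // (leq_trans (leq_addr _ _) le).
  have F0 : fpath (G k) (M0 + (j - M0)) q 0.
    exists (fun _ => q); split=> //; split=> // t; rewrite leqn0 => /eqP ->.
    by rewrite addn0 E.
  have [q0 Hq0] := back F0; exists q0; apply: fpath_anti_le Hq0.
  by rewrite add0n leq_subRL // (leq_trans (leq_addr _ _) le).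
have [q0 Hq0] := pigeon (@fpath_anti (G k) M0) Hl.
have Inf := konig Hq0.
have G0 : G k M0 q0.
  by case: (Hq0 0) => pi [p0 [_ HP]]; have := HP 0 (leqnn 0); rewrite addn0 p0.
apply: (HM0 M0 (leqnn _) q0) => /=; rewrite (negbTE ek); split=> //.
Qed.

Lemma tail : exists M r, [/\ odd r, r < n.*2, 0 < M &
  forall j, M <= j -> (forall q, rk j q <= r) /\
    (forall o, odd o -> o <= r -> exists q, q \in X j /\ rk j q = o)].
Proof.
have [K [NUK HK]] := min_ex (ex_intro (fun i => ~ U i) n U_n).
have K0 : 0 < K by case: K NUK HK => // NU _; exfalso; apply: NU; apply: U_0.
have Kn : K <= n.
  rewrite leqNgt; apply/negP => lt; exact: (HK n lt U_n).
have [M0 HM0] : exists M, forall j, M <= j -> forall q, ~ G (K.*2).+1 j q by apply: contrapT.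
have ek : ~~ odd K.*2 by rewrite odd_double.
have [M1 HM1] := R8 ek HM0.
have [M2 HM2] : exists M, forall i, i < K -> forall j, M <= j ->
    exists q, q \in X j /\ rk j q = (i.*2).+1.
  suff : forall K', K' <= K -> exists M, forall i, i < K' -> forall j, M <= j ->
      exists q, q \in X j /\ rk j q = (i.*2).+1 by apply; apply: leqnn.
  elim=> [|K' IH] le; first by exists 0.
  have [Ma HMa] := IH (ltnW le).
  have [Mb HMb] := present (contrapT (HK K' le)).
  exists (Ma + Mb) => i lt j lej.
  rewrite ltnS leq_eqVlt in lt; case/orP: lt => [/eqP ->|lt].
  - by apply: HMb; apply: leq_trans lej; apply: leq_addl.
  - by apply: HMa => //; apply: leq_trans lej; apply: leq_addr.
exists (M1 + M2).+1, (K.-1).*2.+1; split.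
- by rewrite /= odd_double.
- by rewrite -!mul2n; lia.
- by [].
move=> j lej; split.
- move=> q; case: (boolP (q \in X j)) => Xq; last by rewrite rk_out.
  have : ~ K.*2 <= rk j q.
    move=> le; apply: (HM1 j _ q); last by apply/(rk_spec Xq).
    by move: lej; lia.
  rewrite -!mul2n; lia.
- move=> o oo le.
  have oE : o = (o./2).*2.+1 by rewrite -[o in LHS]odd_double_half oo add1n.
  rewrite oE; apply: HM2.
    move: le; rewrite oE -!mul2n; lia.
  by move: lej; lia.
Qed.
Variables (g : {set Q} -> {set Q}) (I : {set Q}).
Hypotheses (HX0 : X 0 = I) (HXS : forall j, X j.+1 = g (deltaS delta (X j) (w j))).

Lemma complete : accepts (gtrans delta F g) (s_init I) (s_final F) w.
Proof.
have [M [r [or rn M0 HT]]] := tail.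
pose f j := [ffun q => rk j q].
have rankf : forall j, M <= j -> rank (f j) = r.
  move=> j le; apply/eqP; rewrite eqn_leq; apply/andP; split.
    by apply/bigmax_leqP => q _; rewrite ffunE; case: (HT j le) => H _; apply: H.
  have [q [_ Hq]] := (HT j le).2 r or (leqnn r).
  by rewrite /rank; apply: (bigmax_sup q) => //; rewrite ffunE Hq.
pose oi := fix oi t := if t is t'.+1 then
    let p := oi t' in
    if p.1 == set0 then
      (X (M + t) :&: Defs.preim (f (M + t)) ((p.2 + 2) %% r.+1), (p.2 + 2) %% r.+1)
    else (deltaS delta p.1 (w (M + t')) :&: Defs.preim (f (M + t)) p.2, p.2)
  else (set0, 0).
have oiE : forall t, oi t.+1 = (if (oi t).1 == set0 then
      (X (M + t.+1) :&: Defs.preim (f (M + t.+1)) (((oi t).2 + 2) %% r.+1), ((oi t).2 + 2) %% r.+1)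
    else (deltaS delta (oi t).1 (w (M + t)) :&: Defs.preim (f (M + t.+1)) (oi t).2, (oi t).2)) by [].
have oiI : forall t, ~~ odd (oi t).2 /\ (oi t).2 < r.+1.
  elim=> [|t [IH1 IH2]] //=; case: ifP => _ //=; split.
  - by rewrite odd_mod /= ?or // addn2 /= negbK.
  - by rewrite ltn_pmod.
have oiS : forall t, (oi t).1 \subset X (M + t) :&: Defs.preim (f (M + t)) (oi t).2.
  elim=> [|t IH] /=; first by rewrite sub0set.
  case: ifP => _ //=.
  apply/subsetP => x; rewrite !inE => /andP [/bigcupP [p Op xp] ->]; rewrite andbT.
  move/subsetP: IH => /(_ p Op); rewrite inE => /andP [Xp _].
  by rewrite addnS; apply: H1 Xp xp.
have inq : forall t, inQ2 F (X (M + t)) (oi t).1 (f (M + t)) (oi t).2.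
  move=> t; have le : M <= M + t by apply: leq_addr.
  have [HT1 HT2] := HT _ le.
  have tX : forall S : {set Q}, (forall q, q \notin S -> rk (M + t) q = 0) ->
      (forall o, odd o -> o <= r -> exists q, q \in S /\ rk (M + t) q = o) ->
      tight S (f (M + t)).
    move=> S Hout Hin; split; first by rewrite rankf.
    - move=> o oo; rewrite rankf // => ler; have [q [Sq Hq]] := Hin o oo ler.
      by exists q; rewrite // ffunE.
    - by move=> q Sq; rewrite ffunE; apply: Hout.
  split.
  - move=> q; rewrite ffunE; split; first by rewrite /Defs.n mul2n rk_le.
    exact: rk_F.
  - apply: tX => [q|o oo ler]; first by rewrite in_setT.
    have [q [_ Hq]] := HT2 o oo ler; by exists q.
  - by apply: tX => //; apply: rk_out.
  - case: (oiI t) => e1 e2; split => //.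
    have ne : (oi t).2 != r by apply/eqP => E; move: e1; rewrite E or.
    move: e2 ne rn; rewrite /Defs.n -!mul2n; lia.
  - exact: oiS.
have step : forall t, gtrans delta F g
    (inr (X (M + t), (oi t).1, f (M + t), (oi t).2)) (w (M + t))
    (inr (X (M + t.+1), (oi t.+1).1, f (M + t.+1), (oi t.+1).2)).
  move=> t /=; split; first by rewrite addnS HXS.
  split; [exact: inq | exact: inq | | |].
  - by move=> q q' Xq e; rewrite !ffunE addnS; apply: rk_edge.
  - by rewrite !rankf // leq_addr.
  - case: ifP => [/eqP E|/negbT NE].
    + by left; split=> //; rewrite rankf ?addn1 // leq_addr.
    + by right.
pose rho j := if j < M then inl (X j) else inr (X j, (oi (j - M)).1, f j, (oi (j - M)).2).
have rhoM : forall t, rho (M + t) = inr (X (M + t), (oi t).1, f (M + t), (oi t).2).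
  by move=> t; rewrite /rho ltnNge leq_addr /= addKn.
exists rho; split; first by rewrite /rho M0 HX0.
split.
- move=> j; case: (ltngtP j.+1 M) => H.
  + by rewrite /rho H (ltnW H) /= HXS.
  + have E : j = M + (j - M) by rewrite subnKC.
    by rewrite E -addnS !rhoM; apply: step.
  + rewrite /rho {2}H ltnn -H ltnSn subnn /= -HXS; split=> //.
    by have := inq 0; rewrite addn0 H.
apply: contrapT => Hn.
have [N HN] : exists N, forall k, N <= k -> ~ s_final F (rho k).
  apply: contrapT => Hn2; apply: Hn => N; apply: contrapT => Hn3; apply: Hn2.
  by exists N => k le Fk; apply: Hn3; exists k.
have NE : forall t, N <= t -> (oi t).1 != set0.
  move=> t le; apply/negP => /eqP E; apply: (HN (M + t)).
    by apply: leq_trans le (leq_addl _ _).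
  by rewrite rhoM; right; exists (X (M + t)), (f (M + t)), (oi t).2; rewrite -E; split.
have cst : forall s, (oi (N + s)).2 = (oi N).2.
  elim=> [|s IH]; first by rewrite addn0.
  rewrite addnS oiE; have := NE (N + s) (leq_addr _ _).
  case: ifP => [E /negP NE'|_ _]; [by exfalso; apply: NE' | exact: IH].
pose c := (oi N).2.
pose P j q := q \in X j /\ rk j q = c.
have inO : forall s v, v \in (oi (N + s)).1 -> P (M + N + s) v.
  move=> s v; move/subsetP: (oiS (N + s)) => H /H; rewrite !inE ffunE addnA.
  by case/andP => Xv /eqP E; split=> //; rewrite E cst.
have bt : forall l v, v \in (oi (N + l)).1 -> exists pi : nat -> Q, [/\ pi l = v,
    (forall t, t < l -> pi t.+1 \in delta (pi t) (w (M + N + t))) &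
    (forall t, t <= l -> P (M + N + t) (pi t))].
  elim=> [|l IH] v Ov.
    exists (fun _ => v); split=> // t; rewrite leqn0 => /eqP ->; exact: inO.
  have Ov' := Ov; rewrite addnS oiE ifN in Ov'; last by apply: NE; apply: leq_addr.
  move: Ov'; rewrite inE => /andP [/bigcupP [u Ou vu] _].
  have [pi [pl Ve HP]] := IH u Ou.
  exists (fun t => if t <= l then pi t else v); split.
  - by rewrite ltnn.
  - move=> t lt; have tl : t <= l by rewrite -ltnS.
    rewrite tl; case: ifP => H.
      by apply: Ve.
    have -> : t = l by apply/eqP; rewrite eqn_leq -ltnS lt leqNgt H.
    by rewrite pl -addnA.
  - move=> t lt; case: ifP => H; first by apply: HP.
    have -> : t = l.+1 by apply/eqP; rewrite eqn_leq lt ltnNge H.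
    exact: inO Ov.
have Hl : forall l, exists q, fpath P (M + N) q l.
  move=> l; have /set0Pn [v Ov] := NE (N + l) (leq_addr _ _).
  have [pi [_ Ve HP]] := bt l v Ov.
  by exists (pi 0), pi; split=> //; split=> t lt.
have [q0 Hq0] := pigeon (@fpath_anti P (M + N)) Hl.
have [tau [t0 [Vt Ht]]] := konig Hq0.
apply: (@rk_noeven (M + N) tau c).
- by case: (oiI N).
- exact: Vt.
- by case: (Ht 0); rewrite addn0.
- by move=> t; case: (Ht t).
Qed.

End KV.
Lemma accepts_ext (Sigma St : Type) (T1 T2 : St -> Sigma -> St -> Prop) init fin w :
  (forall x a y, T1 x a y <-> T2 x a y) ->
  accepts T1 init fin w <-> accepts T2 init fin w.
Proof.
move=> E; split; case=> rho [H0 [HT HF]]; exists rho; split=> //; split=> // i; exact/E.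
Qed.

Lemma evconst (v : nat -> nat) : (forall t, v t.+1 <= v t) ->
  exists N, forall t, N <= t -> v t = v N.
Proof.
move=> mono.
have monoL : forall a b, a <= b -> v b <= v a.
  move=> a b /subnK <-; elim: (b - a) => [|d IH] //.
  by rewrite addSn; apply: leq_trans (mono _) IH.
suff : forall B m, v m <= B -> exists N, m <= N /\ forall t, N <= t -> v t = v N.
  by move=> /(_ (v 0) 0 (leqnn _)) [N [_ H]]; exists N.
elim=> [|B IH] m le.
  exists m; split=> // t lt; have := monoL _ _ lt; move: le; lia.
case: (pselect (forall t, m <= t -> v t = v m)) => H; first by exists m.
have [t [lt ne]] : exists t, m <= t /\ v t <> v m.
  apply: contrapT => Hn; apply: H => t lt; apply: contrapT => ne; apply: Hn; by exists t.
have := monoL _ _ lt => le2.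
have [N [tN HN]] := IH t (ltac:(lia)).
by exists N; split=> //; apply: leq_trans tN.
Qed.

Lemma cyc_arith r x0 c : odd r -> ~~ odd x0 -> x0 < r.+1 -> ~~ odd c -> c < r.+1 ->
  exists s, iter s.+1 (fun x => (x + 2) %% r.+1) x0 = c.
Proof.
move=> or ex lx ec lc.
have iE : forall s, iter s (fun x => (x + 2) %% r.+1) x0 = (x0 + s.*2) %% r.+1.
  elim=> [|s IH]; first by rewrite addn0 modn_small.
  by rewrite iterS IH modnDml doubleS -addnA addn2.
have x0E := odd_double_half x0; have cE := odd_double_half c.
have rE := odd_double_half r.+1.
rewrite (negbTE ex) add0n in x0E; rewrite (negbTE ec) add0n in cE.
rewrite /= or /= add0n in rE.
exists (c./2 + r.+1./2 - x0./2).-1.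
rewrite iE; have -> : x0 + (c./2 + r.+1./2 - x0./2).-1.+1.*2 = c + r.+1.
  move: x0E cE rE lx lc; rewrite -!mul2n; lia.
by rewrite modnDr modn_small.
Qed.

Section Final.
Variables (Sigma Q : finType) (delta : Q -> Sigma -> {set Q}) (F : {set Q}).
Hypothesis Hcomp : forall q a, delta q a != set0.
Variable w : nat -> Sigma.
Variables (g : {set Q} -> {set Q}) (I : {set Q}).
Hypothesis Hg1 : forall Y : {set Q}, Y \subset g Y.
Hypothesis Hg2 : forall (Y : {set Q}) q, q \in g Y -> exists2 s, s \in Y & delayed_sim delta F q s.

Definition Aacc := exists pi, pi 0 \in I /\ valid delta w 0 pi /\ infF F pi.

Fixpoint Xs j := if j is j'.+1 then g (deltaS delta (Xs j') (w j')) else I.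

Lemma Xs_H1 j q q' : q \in Xs j -> q' \in delta q (w j) -> q' \in Xs j.+1.
Proof.
move=> Xq e /=; apply: (subsetP (Hg1 _)); apply/bigcupP; by exists q.
Qed.

Lemma Xs_H2 j q : q \in Xs j.+1 ->
  exists u s, [/\ u \in Xs j, s \in delta u (w j) & delayed_sim delta F q s].
Proof.
move=> /= /Hg2 [s /bigcupP [u Xu su] Hs]; by exists u, s.
Qed.

Lemma pull j pi : ~ Aacc -> pi 0 \in Xs j -> valid delta w j pi -> infF F pi -> False.
Proof.
move=> NA; elim: j pi => [|j IH] pi X0 V Inf.
  by apply: NA; exists pi.
have [u [s [Xu su Hs]]] := Xs_H2 X0.
have Xss : s \in Xs j.+1 by apply: Xs_H1 Xu su.
have [rho [r0 Vr _ HF]] := dupl Xs_H1 (erefl (pi 0)) V Hs Xss.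
apply: (IH (pc u rho)) => //.
- case=> [|t] /=; first by rewrite addn0 r0.
  by rewrite addnS -addSn; apply: Vr.
- move=> N; have [i [le Fi]] := Inf N; have [k [ik Fk]] := HF i Fi.
  by exists k.+1; split=> //; apply: leq_trans le (leq_trans ik (leqnSn _)).
Qed.

Lemma gcomplete : ~ Aacc -> accepts (gtrans delta F g) (s_init I) (s_final F) w.
Proof.
move=> NA; case: (eqVneq I set0) => [I0|In0].
  have g0 : g set0 = set0.
    by apply/setP => q; rewrite in_set0; apply/negP => /Hg2 [s]; rewrite in_set0.
  have dS0 : forall a, deltaS delta set0 a = set0.
    by move=> a; apply/setP => q; rewrite in_set0; apply/negP => /bigcupP [p]; rewrite in_set0.
  exists (fun _ => inl set0); split; first by rewrite /s_init I0.
  split; last by move=> N; exists N; split=> //; left.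
  by move=> i /=; rewrite dS0 g0.
apply: (@complete _ _ _ _ Hcomp w Xs Xs_H1 Xs_H2) => //.
- move=> j pi X0 V Inf; exact: (pull NA X0 V Inf).
- elim=> [|j IH] //=.
  have /set0Pn [q Xq] := IH; have /set0Pn [q' e] := Hcomp q (w j).
  apply/set0Pn; exists q'; apply: (subsetP (Hg1 _)); apply/bigcupP; by exists q.
Qed.

Lemma gsound : accepts (gtrans delta F g) (s_init I) (s_final F) w -> ~ Aacc.
Proof.
move=> [rho [r0 [T Fin]]] [sig [s0 [Vs Fs]]].
have inS : forall j, sig j \in sS (rho j).
  elim=> [|j IH]; first by rewrite r0.
  rewrite (gtrans_S (T j)); apply: (subsetP (Hg1 _)); apply/bigcupP.
  by exists (sig j) => //; have := Vs j; rewrite add0n.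
case: (pselect (exists m, isr (rho m))) => [Hm|Hn]; last first.
  have [k [_ Fk]] := Fin 0.
  have nr : ~~ isr (rho k) by apply/negP => H; apply: Hn; exists k.
  by have := inS k; rewrite (final_l nr Fk) in_set0.
have [m [Rm Hmin]] := min_ex Hm.
have m0 : 0 < m by case: m Rm Hmin => //; rewrite r0.
have isrA : forall t, isr (rho (m + t)).
  elim=> [|t IH]; first by rewrite addn0.
  by rewrite addnS; case: (gtrans_r IH (T _)).
have st : forall t, step3 delta F (sS (rho (m + t))) (sO (rho (m + t))) (sf (rho (m + t)))
    (si (rho (m + t))) (w (m + t)) (sS (rho (m + t.+1))) (sO (rho (m + t.+1)))
    (sf (rho (m + t.+1))) (si (rho (m + t.+1))).
  by move=> t; rewrite addnS; case: (gtrans_r (isrA t) (T _)).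
pose S t := sS (rho (m + t)); pose O t := sO (rho (m + t)).
pose f t := sf (rho (m + t)); pose i t := si (rho (m + t)).
pose v t := f t (sig (m + t)).
have vmono : forall t, v t.+1 <= v t.
  move=> t; case: (st t) => _ _ H _ _; apply: H; first exact: inS.
  by have := Vs (m + t); rewrite add0n addnS.
have [N HN] := evconst vmono.
pose r := rank (f 0).
have rk_c : forall t, rank (f t) = r.
  elim=> [|t IH] //; case: (st t) => _ _ _ E _; by rewrite -IH E.
have inq : forall t, inQ2 F (S t) (O t) (f t) (i t) by move=> t; case: (st t).
have or : odd r by case: (inq 0) => _ [].
have i0 : i 0 = 0.
  have Tm : gtrans delta F g (rho m.-1) (w m.-1) (rho m) by have := T m.-1; rewrite prednK.
  have nr : ~~ isr (rho m.-1).
    by apply/negP => H; apply: (Hmin m.-1) => //; rewrite prednK.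
  rewrite /i addn0; exact: gtrans_lr nr Rm Tm.
have ilt : forall t, i t < r.+1.
  elim=> [|t IH]; first by rewrite i0.
  case: (st t) => _ _ _ _ [[_ [E _]]|[_ [E _]]]; rewrite /i E; last exact: IH.
  by rewrite -/(f t.+1) rk_c addn1 ltn_pmod.
have ieven : forall t, ~~ odd (i t) by move=> t; case: (inq t) => _ _ _ [].
pose c := v N.
have ceven : ~~ odd c.
  have [k [le Fk]] := Fs (m + N).
  have kE : k = m + (k - m) by rewrite subnKC // (leq_trans (leq_addr _ _) le).
  have Nk : N <= k - m by rewrite leq_subRL // (leq_trans (leq_addr _ _) le).
  rewrite /c -(HN _ Nk) /v; rewrite kE in Fk.
  by case: (inq (k - m)) => Hr _ _ _ _; case: (Hr (sig (m + (k - m)))) => _; apply.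
have clt : c < r.+1.
  by rewrite ltnS -(rk_c N); apply: leq_bigmax.
have emptyA : forall t0, exists t, t0 <= t /\ O t = set0.
  move=> t0; have [k [le Fk]] := Fin (m + t0).
  have kE : k = m + (k - m) by rewrite subnKC // (leq_trans (leq_addr _ _) le).
  exists (k - m); split; first by rewrite leq_subRL // (leq_trans (leq_addr _ _) le).
  have Rk : isr (rho k) by have := isrA (k - m); rewrite -kE.
  by rewrite /O -kE; exact: final_r Rk Fk.
have nextE : forall t, O t = set0 ->
    i t.+1 = (i t + 2) %% r.+1 /\ O t.+1 = S t.+1 :&: Defs.preim (f t.+1) (i t.+1).
  move=> t E; case: (st t) => _ _ _ _ [[_ [H1 H2]]|[ne _]].
  - split; last exact: H2.
    by rewrite /i H1 -/(f t.+1) rk_c addn1.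
  - by move: ne; rewrite -/(O t) E eqxx.
have nextN : forall t, O t != set0 ->
    i t.+1 = i t /\ O t.+1 = deltaS delta (O t) (w (m + t)) :&: Defs.preim (f t.+1) (i t).
  move=> t ne; case: (st t) => _ _ _ _ [[E _]|[_ [H1 H2]]].
  - by move: ne; rewrite /O E eqxx.
  - by split.
have capture : forall t, N <= t -> O t = set0 -> i t.+1 <> c.
  move=> t le E ic.
  have Hc : forall s, sig (m + (t.+1 + s)) \in O (t.+1 + s) /\ i (t.+1 + s) = c.
    elim=> [|s [IH1 IH2]].
      have [E1 E2] := nextE t E; rewrite addn0 E2 !inE ic; split=> //.
      rewrite inS /=; apply/eqP; rewrite -/(v t.+1) -/c /c HN //; exact: leqW.
    have ne : O (t.+1 + s) != set0 by apply/set0Pn; exists (sig (m + (t.+1 + s))).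
    have [E1 E2] := nextN _ ne; rewrite addnS E2 E1 IH2 !inE; split=> //.
    apply/andP; split.
      apply/bigcupP; exists (sig (m + (t.+1 + s))) => //.
      by have := Vs (m + (t.+1 + s)); rewrite add0n addnS.
    apply/eqP; rewrite -/(v (t.+1 + s).+1) /c HN //.
    by move: le; lia.
  have [t' [le' E']] := emptyA t.+1.
  have := (Hc (t' - t.+1)).1; rewrite subnKC // E' in_set0; done.
have [t0 [le0 E0]] := emptyA N.
have cyc : forall s, exists t, [/\ N <= t, O t = set0 &
    i t = iter s (fun x => (x + 2) %% r.+1) (i t0)].
  elim=> [|s [t [le E IH]]]; first by exists t0.
  have [E1 _] := nextE t E.
  have [t' [[le' E'] Hm']] := min_ex (emptyA t.+1).
  have same : forall u, t.+1 + u <= t' -> i (t.+1 + u) = i t.+1.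
    elim=> [|u IHu] lu; first by rewrite addn0.
    have ne : O (t.+1 + u) != set0.
      apply/eqP => E2; apply: (Hm' (t.+1 + u)); first by rewrite -addnS.
      by split=> //; apply: leq_addr.
    by rewrite addnS (nextN _ ne).1 IHu // ltnW // -addnS.
  exists t'; split=> //.
  - by apply: leq_trans le (leq_trans (leqnSn _) le').
  - by rewrite -(subnKC le') same ?subnKC // E1 IH.
have [s Hs] := cyc_arith or (ieven t0) (ilt t0) ceven clt.
have [t [le E Hi]] := cyc s.
apply: (capture t le E); rewrite -Hs iterS -Hi.
by case: (nextE t E).
Qed.

End Final.

Theorem lemma8 (Sigma Q : finType) (delta : Q -> Sigma -> {set Q})
    (I F : {set Q}) :
  0 < #|Sigma| ->
  (forall (q : Q) (a : Sigma), delta q a != set0) ->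
  forall w : nat -> Sigma,
    accepts (schewe_sat_trans delta F) (s_init I) (s_final F) w <->
    accepts (schewe_trans delta F) (s_init I) (s_final F) w.
Proof.
move=> _ Hcomp w.
have E1 : forall x a y, schewe_sat_trans delta F x a y <-> gtrans delta F (str delta F) x a y.
  by case=> [X|[[[X Y] f] i]] a [X'|[[[X' Y'] f'] i']].
have E2 : forall x a y, schewe_trans delta F x a y <-> gtrans delta F (fun X => X) x a y.
  case=> [X|[[[X Y] f] i]] a [X'|[[[X' Y'] f'] i']] //=.
  - split; first by case. by case=> H1 H2 H3 H4; split=> //; case: H1.
  - split; first by case.
    by case=> H1 H2; split=> //; case: H2 => _ [].
have sG1 : forall Y : {set Q}, Y \subset str delta F Y.
  move=> Y; apply/subsetP => q Yq; rewrite inE; apply/asboolP; exists q => //.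
  exact: sim_refl.
have sG2 : forall (Y : {set Q}) q, q \in str delta F Y -> exists2 s, s \in Y & delayed_sim delta F q s.
  by move=> Y q; rewrite inE => /asboolP.
have iG1 : forall Y : {set Q}, Y \subset Y by move=> Y; apply: subxx.
have iG2 : forall (Y : {set Q}) q, q \in Y -> exists2 s, s \in Y & delayed_sim delta F q s.
  by move=> Y q Yq; exists q => //; apply: sim_refl.
rewrite (accepts_ext _ _ _ E1) (accepts_ext _ _ _ E2).
split=> H.
- apply: (gcomplete Hcomp iG1 iG2).
  exact: (gsound sG1 H).
- apply: (gcomplete Hcomp sG1 sG2).
  exact: (gsound iG1 H).
Qed.
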